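(* Let $n\ge2$ and let $P\in\mathrm{Mat}(n^2,\mathbb{C})$ be an orthogonal projection ($P^*=P$, $P^2=P$) of rank $r$. With $P_1=P\otimes I_n$, $P_2=I_n\otimes P$ and $t_m=\operatorname{tr}_3\big((P_1P_2)^m\big)$, define $$F[P]=(rn-t_1)(t_2-t_3)-(t_1-t_2)^2 .$$ Then $F[P]\ge 0$.
   Context: $I_n$ is the $n\times n$ identity matrix, $\otimes$ is the Kronecker product, and $\operatorname{tr}_3$ is the matrix trace on $\mathrm{Mat}(n^3,\mathbb{C})$; $(P_1P_2)^m$ is the $m$-th power of the matrix $P_1P_2$. *)

(* Defs.v *)
From HB Require Import structures.
From mathcomp Require Import all_boot all_order all_algebra.
From mathcomp Require Export mxtens.
Set Implicit Arguments. Unset Strict Implicit. Unset Printing Implicit Defensive.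
Import Order.TTheory GRing.Theory Num.Theory.
Local Open Scope ring_scope.

(* Kronecker product: [tensmx] from mathcomp-real-closed (mxtens.v),
   with the standard convention (A *t B) (i*p+k) (j*q+l) = A i j * B k l. *)

Definition adjmx (C : numClosedFieldType) (m n : nat) (A : 'M[C]_(m, n)) : 'M[C]_(n, m) :=
  \matrix_(i, j) (A j i)^*.

Definition P1 (C : numClosedFieldType) (n : nat) (P : 'M[C]_(n * n)) : 'M[C]_(n * n * n) :=
  tensmx P (1%:M : 'M[C]_n).

(* P_2 = I_n (x) P, cast from index type n*(n*n) to (n*n)*n (associativity of (x)) *)
Definition P2 (C : numClosedFieldType) (n : nat) (P : 'M[C]_(n * n)) : 'M[C]_(n * n * n) :=
  castmx (mulnA n n n, mulnA n n n) (tensmx (1%:M : 'M[C]_n) P).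

Definition tP (C : numClosedFieldType) (n : nat) (P : 'M[C]_(n * n)) (m : nat) : C :=
  \tr (iter m (fun M => (P1 P *m P2 P) *m M) (1%:M : 'M[C]_(n * n * n))).

Definition FP (C : numClosedFieldType) (n r : nat) (P : 'M[C]_(n * n)) : C :=
  (r%:R * n%:R - tP P 1) * (tP P 2 - tP P 3) - (tP P 1 - tP P 2) ^+ 2.
Arguments FP {C} n r P.

(* Main.v *)
Require Import Defs.
From mathcomp Require Import all_boot all_order all_algebra.
From mathcomp Require Import ring.
Set Implicit Arguments. Unset Strict Implicit. Unset Printing Implicit Defensive.
Import Order.TTheory GRing.Theory Num.Theory.
Local Open Scope ring_scope.

Section H.
Variable C : numClosedFieldType.

Lemma adjmxE m p (A : 'M[C]_(m, p)) : adjmx A = (map_mx Num.conj A)^T.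
Proof. by apply/matrixP => i j; rewrite !mxE. Qed.

Lemma adjmx_mul m p q (A : 'M[C]_(m, p)) (B : 'M[C]_(p, q)) :
  adjmx (A *m B) = adjmx B *m adjmx A.
Proof. by rewrite !adjmxE map_mxM trmx_mul. Qed.

Lemma adjmxB m p (A B : 'M[C]_(m, p)) : adjmx (A - B) = adjmx A - adjmx B.
Proof. by apply/matrixP => i j; rewrite !mxE rmorphB. Qed.

Lemma adjmx1 m : adjmx (1%:M : 'M[C]_m) = 1%:M.
Proof. by apply/matrixP => i j; rewrite !mxE rmorph_nat eq_sym. Qed.

Lemma adjmx_tens m p q s (A : 'M[C]_(m, p)) (B : 'M[C]_(q, s)) :
  adjmx (tensmx A B) = tensmx (adjmx A) (adjmx B).
Proof. by apply/matrixP => i j; rewrite !mxE rmorphM. Qed.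

Lemma adjmx_cast m p m' p' (e1 : m = m') (e2 : p = p') (A : 'M[C]_(m, p)) :
  adjmx (castmx (e1, e2) A) = castmx (e2, e1) (adjmx A).
Proof. by case: m' / e1; case: p' / e2; rewrite !castmx_id. Qed.

Lemma castmx_mulsq m m' (e : m = m') (A B : 'M[C]_m) :
  castmx (e, e) A *m castmx (e, e) B = castmx (e, e) (A *m B).
Proof. by case: m' / e; rewrite !castmx_id. Qed.

Lemma tr_tens m p (A : 'M[C]_m) (B : 'M[C]_p) : \tr (tensmx A B) = \tr A * \tr B.
Proof. by rewrite /mxtrace mulr_sum; apply: eq_bigr => i _; rewrite !mxE. Qed.

Lemma tr_pid m r : (r <= m)%N -> \tr (pid_mx r : 'M[C]_m) = r%:R.
Proof.
move=> hr; rewrite /mxtrace.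
under eq_bigr => i _ do rewrite mxE eqxx /=.
rewrite -(big_mkord xpredT (fun i => ((i < r)%N)%:R)) (@big_cat_nat _ _ _ r) //=.
rewrite big_nat_cond (eq_bigr (fun _ => 1)); last first.
  by move=> i /andP[/andP[_ ->]].
rewrite -big_nat_cond sumr_const_nat subn0 big_nat_cond big1 ?addr0 //.
by move=> i /andP[/andP[/leq_gtF ->]].
Qed.

Lemma tr_proj m (P : 'M[C]_m) : P *m P = P -> \tr P = (\rank P)%:R.
Proof.
move=> PP.
set L := col_ebase P; set U := row_ebase P; set D := (pid_mx (\rank P) : 'M[C]_m).
have EP : P = L *m D *m U by rewrite mulmx_ebase.
have uL : L \in unitmx by apply: col_ebase_unit.
have uU : U \in unitmx by apply: row_ebase_unit.
have DD : D *m D = D by rewrite /D pid_mx_id // rank_leq_row.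
have H : D *m (U *m L) *m D = D.
  have : L *m (D *m (U *m L) *m D *m U) = L *m (D *m U).
    transitivity (P *m P); first by rewrite {1 2}EP !mulmxA.
    by rewrite PP {1}EP mulmxA.
  move/(congr1 (mulmx (invmx L))); rewrite !mulKmx //.
  move/(congr1 (mulmx^~ (invmx U))); rewrite !mulmxK //.
have -> : \tr P = \tr (D *m (U *m L) *m D).
  rewrite {1}EP -mulmxA mxtrace_mulC -{1}DD -!mulmxA mxtrace_mulC.
  by rewrite !mulmxA.
rewrite H.
by rewrite tr_pid // rank_leq_row.
Qed.
Lemma CS (T : finType) (f g : T -> C) :
  (\sum_a (f a)^* * g a) * (\sum_a (g a)^* * f a)
  <= (\sum_a (f a)^* * f a) * (\sum_a (g a)^* * g a).
Proof.
set ff := fun a => (f a)^* * f a; set gg := fun a => (g a)^* * g a.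
set fg := fun a => (f a)^* * g a; set gf := fun a => (g a)^* * f a.
have H0 : 0 <= \sum_a \sum_b (f a * g b - f b * g a) * (f a * g b - f b * g a)^*.
  by apply: sumr_ge0 => a _; apply: sumr_ge0 => b _; apply: mul_conjC_ge0.
have E : \sum_a \sum_b (f a * g b - f b * g a) * (f a * g b - f b * g a)^* =
   \sum_a \sum_b (ff a * gg b) + \sum_a \sum_b (gg a * ff b)
   - \sum_a \sum_b (fg a * gf b) - \sum_a \sum_b (gf a * fg b).
  rewrite -big_split -!sumrB /=; apply: eq_bigr => a _.
  rewrite -big_split -!sumrB /=; apply: eq_bigr => b _.
  rewrite /ff /gg /fg /gf rmorphB !rmorphM /=; ring.
rewrite E -!big_distrlr /= in H0.
rewrite -subr_ge0.
have -> : (\sum_a ff a) * (\sum_a gg a) - (\sum_a fg a) * (\sum_a gf a) =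
  ((\sum_a ff a) * (\sum_a gg a) + (\sum_a gg a) * (\sum_a ff a)
   - (\sum_a fg a) * (\sum_a gf a) - (\sum_a gf a) * (\sum_a fg a)) / 2.
  by field.
by rewrite divr_ge0 // ler0n.
Qed.

Lemma trdot m p (X Y : 'M[C]_(m, p)) :
  \tr (adjmx X *m Y) = \sum_(q : 'I_p * 'I_m) (X q.2 q.1)^* * Y q.2 q.1.
Proof.
rewrite /mxtrace -(pair_bigA _ (fun i j => (X j i)^* * Y j i)) /=.
by apply: eq_bigr => i _; rewrite mxE; apply: eq_bigr => j _; rewrite mxE.
Qed.

Lemma trCS m p (X Y : 'M[C]_(m, p)) :
  \tr (adjmx X *m Y) * \tr (adjmx Y *m X) <= \tr (adjmx X *m X) * \tr (adjmx Y *m Y).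
Proof. by rewrite !trdot; apply: CS. Qed.

End H.

Theorem lemma2 (C : numClosedFieldType) (n r : nat) (P : 'M[C]_(n * n)) :
  (2 <= n)%N ->
  adjmx P = P ->
  P *m P = P ->
  \rank P = r ->
  0 <= FP n r P.
Proof.
move=> hn hadj hPP hr.
set Q := P1 P; set R := P2 P.
have hQ : adjmx Q = Q by rewrite /Q /P1 adjmx_tens hadj adjmx1.
have hR : adjmx R = R by rewrite /R /P2 adjmx_cast adjmx_tens hadj adjmx1.
have hQQ : Q *m Q = Q by rewrite /Q /P1 tensmx_mul hPP mulmx1.
have hRR : R *m R = R by rewrite /R /P2 castmx_mulsq tensmx_mul hPP mulmx1.
have trQ : \tr Q = r%:R * n%:R by rewrite /Q /P1 tr_tens tr_proj // hr mxtrace1.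
have t1 : tP P 1 = \tr (Q *m R) by rewrite /tP /= mulmx1.
have t2 : tP P 2 = \tr (Q *m R *m Q *m R) by rewrite /tP /= mulmx1 !mulmxA.
have t3 : tP P 3 = \tr (Q *m R *m Q *m R *m Q *m R) by rewrite /tP /= mulmx1 !mulmxA.
have QQ : forall k (M : 'M[C]_(k, _)), M *m Q *m Q = M *m Q by move=> k M; rewrite -mulmxA hQQ.
have RR : forall k (M : 'M[C]_(k, _)), M *m R *m R = M *m R by move=> k M; rewrite -mulmxA hRR.
set A := Q *m R *m Q.
have QA : Q *m A = A by rewrite /A !mulmxA hQQ.
have AQ : A *m Q = A by rewrite /A QQ.
have hA : adjmx A = A by rewrite /A !adjmx_mul hQ hR mulmxA.
set X := Q - R *m Q.
set Y := X *m A.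
have hX : adjmx X = Q - Q *m R by rewrite /X adjmxB adjmx_mul hQ hR.
have hY : adjmx Y = A *m (Q - Q *m R) by rewrite /Y adjmx_mul hA hX.
have K1 : adjmx X *m X = Q - A.
  rewrite hX /X !mulmxBl !mulmxBr !mulmxA hQQ RR.
  by rewrite subrr subr0.
have K2 : adjmx Y *m Y = A *m A - A *m A *m A.
  rewrite hY -hX /Y -mulmxA [adjmx X *m (X *m A)]mulmxA K1 mulmxBl QA mulmxBr.
  by rewrite mulmxA.
have K3 : adjmx X *m Y = A - A *m A.
  by rewrite /Y mulmxA K1 mulmxBl QA.
have K4 : adjmx Y *m X = A - A *m A.
  by rewrite hY -hX -mulmxA K1 mulmxBr AQ.
have trA : \tr A = \tr (Q *m R).
  by rewrite /A mxtrace_mulC !mulmxA hQQ.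
have trAA : \tr (A *m A) = \tr (Q *m R *m Q *m R).
  by rewrite /A !mulmxA QQ mxtrace_mulC !mulmxA hQQ.
have trAAA : \tr (A *m A *m A) = \tr (Q *m R *m Q *m R *m Q *m R).
  by rewrite /A !mulmxA !QQ mxtrace_mulC !mulmxA hQQ.
have := trCS X Y.
rewrite K1 K2 K3 K4 !raddfB /= trQ trA trAA trAAA -t1 -t2 -t3.
by rewrite /FP subr_ge0 expr2.
Qed.
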